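(* Let $\gamma\in(1,3]$ and $m\in\{1,2\}$. Let $P_*=(V_*,C_* )$ be either $P_8$ with $z\in(0,z_M]$, or $P_6$ with $z\in[z_m,z_M]$. Then the quadratic equation in $c$ $$-G_C(V_*,C_* )c^2+\big(F_C(V_*,C_* )-G_V(V_*,C_* )\big)c+F_V(V_*,C_* )=0$$ has two real roots of opposite signs (in particular, at $P_8$ the discriminant $R^2=(F_C-G_V)^2+4F_VG_C$ is strictly positive). Hence there is exactly one negative root, namely $c_1=\frac{F_C-G_V+R}{2G_C}<0$ with $R=\sqrt{(F_C-G_V)^2+4F_VG_C}$, all evaluated at $(V_*,C_* )$.
   Context: Fix $m\in\{1,2\}$ and $\gamma\in(1,3]$. For $z>0$ put $\lambda=1+m\gamma z$, $a_1=1+\frac{m(\gamma-1)}{2}$, $a_2=\frac{m(\gamma-1)+mz\gamma(\gamma-3)}{2}$, $a_3=\frac{mz\gamma(\gamma-1)}{2}$, $G(V,C;\gamma,z)=C^2[(m+1)V+2mz]-V(1+V)(\lambda+V)$, $F(V,C;\gamma,z)=C\{C^2[1+\frac{mz}{1+V}]-a_1(1+V)^2+a_2(1+V)-a_3\}$; $F_C,F_V,G_C,G_V$ denote partial derivatives in $C$ and $V$. $z_M=(\sqrt\gamma+\sqrt2)^{-2}$, $z_m=\frac{\gamma-1}{(2\gamma-1)(\gamma+1)}$; for $z\in(0,z_M]$, $w(z)=\sqrt{1-2(\gamma+2)z+(\gamma-2)^2z^2}$, $V_6=\frac{-1+(\gamma-2)z-w}{2}$, $C_6=1+V_6$, $V_8=\frac{-1+(\gamma-2)z+w}{2}$,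 $C_8=1+V_8$, $P_6=(V_6,C_6)$, $P_8=(V_8,C_8)$. *)

(* Defs.v *)
From Stdlib Require Import Reals Lra.
From Coquelicot Require Import Coquelicot.
Open Scope R_scope.

Section Defs.
Variables (m g z : R).

Definition lam : R := 1 + m * g * z.
Definition a1 : R := 1 + m * (g - 1) / 2.
Definition a2 : R := (m * (g - 1) + m * z * g * (g - 3)) / 2.
Definition a3 : R := m * z * g * (g - 1) / 2.

Definition G (V C : R) : R :=
  C ^ 2 * ((m + 1) * V + 2 * m * z) - V * (1 + V) * (lam + V).
Definition F (V C : R) : R :=
  C * (C ^ 2 * (1 + m * z / (1 + V)) - a1 * (1 + V) ^ 2 + a2 * (1 + V) - a3).

Definition F_C (V C : R) : R := Derive (fun c => F V c) C.
Definition F_V (V C : R) : R := Derive (fun v => F v C) V.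
Definition G_C (V C : R) : R := Derive (fun c => G V c) C.
Definition G_V (V C : R) : R := Derive (fun v => G v C) V.
End Defs.

Definition z_M (g : R) : R := / (sqrt g + sqrt 2) ^ 2.
Definition z_m (g : R) : R := (g - 1) / ((2 * g - 1) * (g + 1)).
Definition w (g z : R) : R := sqrt (1 - 2 * (g + 2) * z + (g - 2) ^ 2 * z ^ 2).
Definition V6 (g z : R) : R := (-1 + (g - 2) * z - w g z) / 2.
Definition C6 (g z : R) : R := 1 + V6 g z.
Definition V8 (g z : R) : R := (-1 + (g - 2) * z + w g z) / 2.
Definition C8 (g z : R) : R := 1 + V8 g z.

Definition quadr (m g z V C c : R) : R :=
  - G_C m g z V C * c ^ 2 + (F_C m g z V C - G_V m g z V C) * c + F_V m g z V C.
Definition discr (m g z V C : R) : R :=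
  (F_C m g z V C - G_V m g z V C) ^ 2 + 4 * F_V m g z V C * G_C m g z V C.
Definition c1_root (m g z V C : R) : R :=
  (F_C m g z V C - G_V m g z V C + sqrt (discr m g z V C)) / (2 * G_C m g z V C).

(* Main.v *)
Require Import Defs.
From Stdlib Require Import Reals Lra Psatz.
From Coquelicot Require Import Coquelicot.
Open Scope R_scope.
Lemma GC_eq m g z V C : G_C m g z V C = 2*C*((m+1)*V+2*m*z).
Proof. unfold G_C. apply is_derive_unique. unfold G. auto_derive. trivial. ring. Qed.
Lemma FV_eq m g z V C : 1+V <> 0 ->
  F_V m g z V C = -C*(C^2*m*z/(1+V)^2 + 2*a1 m g*(1+V) - a2 m g z).
Proof. intro H. unfold F_V. apply is_derive_unique. unfold F. auto_derive. auto. field. auto. Qed.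
Lemma quad_lemma (a B f : R) : a < 0 -> f < 0 ->
  0 < B^2+4*f*a /\
  (exists c c', c<0<c' /\ -a*c^2+B*c+f=0 /\ -a*c'^2+B*c'+f = 0) /\
  (B + sqrt (B^2+4*f*a))/(2*a) < 0 /\
  -a*((B + sqrt (B^2+4*f*a))/(2*a))^2+B*((B + sqrt (B^2+4*f*a))/(2*a))+f=0 /\
  (forall c, -a*c^2+B*c+f=0 -> c<0 -> c=(B + sqrt (B^2+4*f*a))/(2*a)).
Proof.
  intros Ha Hf.
  assert (HD : 0 < B^2+4*f*a) by nra.
  set (D := B^2+4*f*a) in *.
  set (s := sqrt D).
  assert (Hs2 : s*s = D) by (apply sqrt_sqrt; lra).
  assert (Hs0 : 0 <= s) by apply sqrt_pos.
  assert (HBB : B*B < s*s) by (rewrite Hs2; unfold D; nra).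
  assert (HsB : B < s) by nra.
  assert (HsB' : -B < s) by nra.
  set (c1 := (B+s)/(2*a)). set (c2 := (B-s)/(2*a)).
  assert (Hc1 : c1 < 0).
  { unfold c1. unfold Rdiv. apply Rmult_pos_neg. lra. apply Rinv_neg; lra. }
  assert (Hc2 : 0 < c2).
  { unfold c2. unfold Rdiv. apply Rmult_neg_neg. lra. apply Rinv_neg; lra. }
  assert (Hsum : a*(c1+c2) = B) by (unfold c1, c2; field; lra).
  assert (Hprod : a*(c1*c2) = -f).
  { unfold c1, c2. transitivity ((B*B-s*s)/(4*a)); [field; lra|]. rewrite Hs2. unfold D. field. lra. }
  assert (Hfac : forall c, -a*c^2+B*c+f = -a*(c-c1)*(c-c2)).
  { intro c. replace f with (-(a*(c1*c2))) by lra. rewrite <- Hsum. ring. }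
  split; [exact HD|]. split.
  { exists c1, c2. rewrite !Hfac. split; [lra|]. split; ring. }
  split; [exact Hc1|]. split; [rewrite Hfac; ring|].
  intros c Hc Hn. rewrite Hfac in Hc.
  destruct (Req_dec c c1) as [E|E]; [exact E|].
  exfalso. assert (c - c2 = 0).
  { apply Rmult_eq_reg_l with (-a*(c-c1)). rewrite Rmult_0_r. rewrite <- Hc. ring.
    apply Rmult_integral_contrapositive. split; lra. }
  lra.
Qed.

Lemma zM_facts g z : 1 < g -> 0 < z -> z <= z_M g ->
  z <= 1/5 /\ 0 <= 1 - 2 * (g + 2) * z + (g - 2) ^ 2 * z ^ 2.
Proof.
  intros Hg Hz HzM. unfold z_M in HzM.
  set (s := sqrt g) in *. set (t := sqrt 2) in *.
  assert (Hs : s*s = g) by (apply sqrt_sqrt; lra).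
  assert (Ht : t*t = 2) by (apply sqrt_sqrt; lra).
  assert (Hs0 : 0 <= s) by apply sqrt_pos.
  assert (Ht0 : 0 <= t) by apply sqrt_pos.
  assert (Hs1 : 1 <= s) by nra.
  assert (Ht1 : 1.4 <= t) by nra.
  assert (Hu : 5.76 <= (s+t)^2) by nra.
  assert (Hzu : z * (s+t)^2 <= 1).
  { replace 1 with (/ (s+t)^2 * (s+t)^2) by (field; nra).
    apply Rmult_le_compat_r; nra. }
  split; [nra|].
  assert (E : 1 - 2 * (g + 2) * z + (g - 2) ^ 2 * z ^ 2 =
              (1 - (s+t)^2*z) * (1 - (s-t)^2*z)).
  { transitivity (1 - (2*(s*s)+2*(t*t))*z + (s*s - t*t)^2*z^2); [rewrite Hs, Ht; ring | ring]. }
  assert (Hst : (s-t)^2*z <= (s+t)^2*z) by (apply Rmult_le_compat_r; nra).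
  rewrite E. apply Rmult_le_pos; lra.
Qed.

Lemma Ppos (m e z : R) : (m = 1 \/ m = 2) -> 0 < e <= 2 -> 0 < z <= 1/5 ->
  e <= z * (2*(1+e)-1)*((1+e)+1) ->
  let g := 1+e in let D := 2+m*e in let N := e+z*(g*g-3*g-2) in
  0 < m*m*N*N-2*m*D*(1+(g-2)*z)*N+4*D*D*g*z.
Proof.
  intros Hm He Hz Hh g D N. subst g D N.
  set (h := z * (2*(1+e)-1)*((1+e)+1) - e).
  assert (h0 : 0 <= h) by (unfold h; lra).
  destruct Hm as [-> | ->].
  - assert (A : 0 <= e*z*z*(16-2*e^2-e^3)).
    { assert (e^2 <= 4) by nra. assert (e^3 <= 8) by nra.
      apply Rmult_le_pos; [|lra]. apply Rmult_le_pos; nra. }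
    assert (B : 0 <= e*z*(18-4*z)) by (apply Rmult_le_pos; nra).
    assert (C : 0 <= e^2*z) by nra.
    assert (C' : 0 <= e^2*z^2) by nra.
    assert (Eq : 1*1*(e + z * ((1 + e) * (1 + e) - 3 * (1 + e) - 2)) * (e + z * ((1 + e) * (1 + e) - 3 * (1 + e) - 2)) -
      2 * 1 * (2 + 1 * e) * (1 + (1 + e - 2) * z) * (e + z * ((1 + e) * (1 + e) - 3 * (1 + e) - 2)) +
      4 * (2 + 1 * e) * (2 + 1 * e) * (1 + e) * z
      = 4*h + e*h + 24*z + e*z*(18-4*z) + e^2*z + 7*(e^2*z^2) + e*z*z*(16-2*e^2-e^3)).
    { unfold h. ring. }
    rewrite Eq. assert (0 <= e*h) by nra. lra.
  - assert (A : 0 <= 4*e*z*z*(6+3*e-e^3)).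
    { assert (e^2 <= 4) by nra. assert (e^3 <= 4*e) by nra.
      apply Rmult_le_pos; [|lra]. apply Rmult_le_pos; nra. }
    assert (C : 0 <= e*z) by nra.
    assert (C1 : 0 <= e^2*z) by nra.
    assert (C2 : 0 <= z^2) by nra.
    assert (Eq : 2*2*(e + z * ((1 + e) * (1 + e) - 3 * (1 + e) - 2)) * (e + z * ((1 + e) * (1 + e) - 3 * (1 + e) - 2)) -
      2 * 2 * (2 + 2 * e) * (1 + (1 + e - 2) * z) * (e + z * ((1 + e) * (1 + e) - 3 * (1 + e) - 2)) +
      4 * (2 + 2 * e) * (2 + 2 * e) * (1 + e) * z
      = 8*h + 4*(e*h) + 32*z + 32*z^2 + 16*(e*z) + 4*(e^2*z) + 4*e*z*z*(6+3*e-e^3)).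
    { unfold h. ring. }
    rewrite Eq. assert (0 <= e*h) by nra. lra.
Qed.

Lemma root_below (k gz C T : R): C*C - k*C + gz = 0 -> k < 2*T -> T*T - k*T + gz > 0 -> C < T.
Proof. intros. destruct (Rlt_le_dec C T); [auto|]. exfalso.
  assert (0 <= (C-T)*(C+T-k)) by (apply Rmult_le_pos; lra). nra. Qed.

Lemma root_above (k gz C T : R): C*C - k*C + gz = 0 -> 2*C <= k -> 2*T < k -> T*T - k*T + gz > 0 -> T < C.
Proof. intros. destruct (Rlt_le_dec T C); [auto|]. exfalso.
  assert (0 <= (T-C)*(k-C-T)) by (apply Rmult_le_pos; lra). nra. Qed.

Lemma signs m g z w C :
  (m=1 \/ m=2) -> 1<g<=3 -> 0<z -> z <= 1/5 -> 0 <= w ->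
  w*w = 1 - 2 * (g + 2) * z + (g - 2) ^ 2 * z ^ 2 ->
  (C = (1+(g-2)*z+w)/2 \/ (C = (1+(g-2)*z-w)/2 /\ z_m g <= z)) ->
  0 < C /\ (m+1)*(C-1)+2*m*z < 0 /\ 0 < m*z + 2*a1 m g*C - a2 m g z.
Proof.
  intros Hm Hg Hz Hz5 Hw0 Hw HC.
  set (k := 1+(g-2)*z) in *.
  assert (Hk : 0 < k) by (unfold k; nra).
  assert (Hq : C*C - k*C + g*z = 0).
  { destruct HC as [-> | [-> _]]; (transitivity ((w*w - k*k)/4 + g*z); [field | rewrite Hw; unfold k; field]). }
  assert (HC0 : 0 < C).
  { destruct HC as [-> | [-> _]]. lra.
    assert (w*w < k*k) by (rewrite Hw; unfold k; nra). nra. }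
  split; [exact HC0|]. split.
  - destruct Hm as [-> | ->].
    + assert (C < 1 - z). { apply (root_below k (g*z)); auto; unfold k; nra. } lra.
    + assert (C < 1 - 4*z/3). { apply (root_below k (g*z)); auto; unfold k; nra. } lra.
  - set (e := g-1).
    assert (He : 0 < e <= 2) by (unfold e; lra).
    set (D := 2+m*e). assert (HD : 0 < D) by (unfold D; destruct Hm as [-> | ->]; lra).
    set (N := e+z*(g*g-3*g-2)).
    assert (Ea : 2*a1 m g = D) by (unfold a1, D, e; field).
    assert (Eb : 2*(a2 m g z - m*z) = m*N) by (unfold a2, N, e; field).
    set (T := m*N/(2*D)).
    assert (HT : 2*T < k).
    { unfold T. apply Rmult_lt_reg_r with D; auto. field_simplify; [|lra].
      unfold N, k, D, e. destruct Hm as [-> | ->]; nra. }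
    assert (HCT : T < C).
    { destruct HC as [HC | [HC Hzm]].
      - assert (2*C >= k) by (rewrite HC; lra). lra.
      - apply (root_above k (g*z)); auto. rewrite HC; lra.
        unfold z_m in Hzm.
        assert (Hh : e <= z * (2*(1+e)-1)*((1+e)+1)).
        { unfold e. replace (1+(g-1)) with g by ring.
          assert (HP : 0 < (2*g-1)*(g+1)) by nra.
          replace (g-1) with ((g-1)/((2*g-1)*(g+1)) * ((2*g-1)*(g+1))) by (field; lra).
          rewrite Rmult_assoc. apply Rmult_le_compat_r; lra. }
        pose proof (Ppos m e z Hm He (conj Hz Hz5) Hh) as HP. simpl in HP.
        replace (1+e) with g in HP by (unfold e; ring).
        fold N in HP. fold D in HP.
        assert (E : T*T - k*T + g*z = (m*m*N*N-2*m*D*(1+(g-2)*z)*N+4*D*D*g*z)/(4*D*D)).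
        { unfold T, k. field. lra. }
        rewrite E. apply Rdiv_lt_0_compat; nra. }
    assert (E : m*z + 2*a1 m g*C - a2 m g z = D*(C - T)).
    { unfold T. rewrite Ea. field_simplify; [|lra]. nra. }
    rewrite E. apply Rmult_lt_0_compat; lra.
Qed.

Theorem mainTheorem3 (m g z Vs Cs : R) :
  (m = 1 \/ m = 2) -> 1 < g <= 3 -> 0 < z ->
  ((0 < z <= z_M g /\ Vs = V8 g z /\ Cs = C8 g z) \/
   (z_m g <= z <= z_M g /\ Vs = V6 g z /\ Cs = C6 g z)) ->
  G_C m g z Vs Cs <> 0 /\
  0 < discr m g z Vs Cs /\
  (exists c c', c < 0 < c' /\ quadr m g z Vs Cs c = 0 /\ quadr m g z Vs Cs c' = 0) /\
  c1_root m g z Vs Cs < 0 /\ quadr m g z Vs Cs (c1_root m g z Vs Cs) = 0 /\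
  (forall c, quadr m g z Vs Cs c = 0 -> c < 0 -> c = c1_root m g z Vs Cs).
Proof.
  intros Hm Hg Hz HP.
  assert (HzM : z <= z_M g) by (destruct HP as [[[_ H] _] | [[_ H] _]]; exact H).
  destruct (zM_facts g z ltac:(lra) Hz HzM) as [Hz5 HD].
  assert (Hw0 : 0 <= w g z) by apply sqrt_pos.
  assert (Hw : w g z * w g z = 1 - 2 * (g + 2) * z + (g - 2) ^ 2 * z ^ 2)
    by (apply sqrt_sqrt; exact HD).
  assert (HC : Cs = (1+(g-2)*z+w g z)/2 \/ (Cs = (1+(g-2)*z-w g z)/2 /\ z_m g <= z)).
  { destruct HP as [[_ [_ ->]] | [[H _] [_ ->]]].
    - left. unfold C8, V8. field.
    - right. split; [unfold C6, V6; field | exact H]. }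
  assert (HV : Vs = Cs - 1).
  { destruct HP as [[_ [-> ->]] | [_ [-> ->]]]; [unfold C8 | unfold C6]; ring. }
  destruct (signs m g z (w g z) Cs Hm Hg Hz Hz5 Hw0 Hw HC) as [HC0 [HG HF]].
  assert (EG : G_C m g z Vs Cs = 2*Cs*((m+1)*(Cs-1)+2*m*z)) by (rewrite GC_eq, HV; ring).
  assert (EF : F_V m g z Vs Cs = -Cs*(m*z + 2*a1 m g*Cs - a2 m g z)).
  { rewrite FV_eq by lra. rewrite HV. field. lra. }
  assert (HGn : G_C m g z Vs Cs < 0) by (rewrite EG; nra).
  assert (HFn : F_V m g z Vs Cs < 0) by (rewrite EF; nra).
  destruct (quad_lemma _ (F_C m g z Vs Cs - G_V m g z Vs Cs) _ HGn HFn)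
    as [H1 [H2 [H3 [H4 H5]]]].
  unfold discr, quadr, c1_root.
  split; [lra|]. split; [exact H1|]. split; [exact H2|]. split; [exact H3|].
  split; [exact H4|exact H5].
Qed.
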